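(* Let $(V,\tau)$ be a topological mixed lattice space. (a) The map $Q:V\to V_p$, $Q(x)={}^ux$, is continuous and satisfies: $Q(V)=V_p$ and $Q(x)=x$ for all $x\in V_p$; $Q(tx)=tQ(x)$ for all $t\ge 0$, $x\in V$; $Q(x+y)\le Q(x)+Q(y)$ for all $x,y$; $Q(x)=0$ and $Q(-x)=0$ imply $x=0$; and $Q(x-Q(x))=0$ for all $x$. That is, $Q$ is a proper asymmetric cone norm with respect to the cone $V_p$. (b) The map $Q:V\to V_{sp}$, $Q(x)=x^u$, is continuous and satisfies: $Q(V)=V_{sp}$ and $Q(x)=x$ for all $x\in V_{sp}$; $Q(tx)=tQ(x)$ for all $t\ge0$; $Q(x+y)\le Q(x)+Q(y)$ for all $x,y$; $Q(x)=0$ and $Q(-x)=0$ imply $x=0$; $Q(x-Q(x))=0$ for all $x$. Moreover $Q$ is increasing for both orderings: $x\preccurlyeq y$ implies $Q(x)\preccurlyeq Q(y)$, and $x\le y$ implies $Q(x)\le Q(y)$.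
   Context: A mixed lattice vector space $(V,\le,\preccurlyeq)$ is a real vector space $V$ with two partial orderings $\le$ (initial order) and $\preccurlyeq$ (specific order), each making $V$ a partially ordered vector space, with positive cones $V_p=\{x:0\le x\}$, $V_{sp}=\{x:0\preccurlyeq x\}$, such that: (1) for all $x,y$ the elements $x\curlyvee y=\min\{w: w\succcurlyeq x,\ w\ge y\}$ and $x\curlywedge y=\max\{w: w\preccurlyeq x,\ w\le y\}$ exist (min/max with respect to $\le$); (2) $x\preccurlyeq y$ implies $x\le y$; (3) $x\curlyvee y, x\curlywedge y\in V_{sp}$ whenever $x,y\in V_{sp}$. A topological mixed lattice space is such a $V$ with a vector topology making $(x,y)\mapsto x\curlyvee y$ and $(x,y)\mapsto x\curlywedge y$ continuous. Notation: $x^u=0\curlyvee x$, ${}^ux=x\curlyvee 0$. Given a cone $C$ in a topological vector space $X$ with associated order $\le_C$, a continuous map $Q:X\to C$ is an asymmetric cone norm if $Q(x)=x$ for $x\in C$ and $Q(X)=C$; $Q(tx)=tQ(x)$ for $t\ge 0$; $Q(x+y)\le_C Q(x)+Q(y)$; and $Q(x)=Q(-x)=0$ implies $x=0$. It is proper if $Q(x-Q(x))=0$ for all $x$. *)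

(* Defs.v *)
From HB Require Import structures.
From mathcomp Require Import all_boot all_order all_algebra.
From mathcomp Require Import all_classical all_reals all_analysis.
Set Implicit Arguments. Unset Strict Implicit. Unset Printing Implicit Defensive.
Import Order.TTheory GRing.Theory Num.Theory.
Local Open Scope classical_set_scope.
Local Open Scope ring_scope.

Definition pove (R : realType) (V : lmodType R) (le : V -> V -> Prop) : Prop :=
  [/\ (forall x, le x x),
      (forall x y, le x y -> le y x -> x = y),
      (forall x y z, le x y -> le y z -> le x z),
      (forall x y z, le x y -> le (x + z) (y + z)) &
      (forall (t : R) x y, 0 <= t -> le x y -> le (t *: x) (t *: y))].

Definition is_min (V : Type) (le : V -> V -> Prop) (A : set V) (m : V) :=
  A m /\ forall w, A w -> le m w.
Definition is_max (V : Type) (le : V -> V -> Prop) (A : set V) (m : V) :=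
  A m /\ forall w, A w -> le w m.

(* Mixed lattice vector space (V, le, sle), where sup x y = x ⋎ y and
   inf x y = x ⋏ y are the (necessarily unique) mixed envelopes, so the
   existence axiom (1) is expressed by providing them as functions. *)
Definition mixed_lattice_vector_space (R : realType) (V : lmodType R)
  (le sle : V -> V -> Prop) (sup inf : V -> V -> V) : Prop :=
  (pove le /\ pove sle /\
      (forall x y, is_min le [set w | sle x w /\ le y w] (sup x y)) /\
      (forall x y, is_max le [set w | sle w x /\ le w y] (inf x y)) /\
      (forall x y, sle x y -> le x y) /\
      (forall x y, sle 0 x -> sle 0 y -> sle 0 (sup x y) /\ sle 0 (inf x y))).

Definition topological_mixed_lattice_space (R : realType)
  (V : topologicalLmodType R) (le sle : V -> V -> Prop) (sup inf : V -> V -> V)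
  : Prop :=
  [/\ mixed_lattice_vector_space le sle sup inf,
      continuous (fun p : V * V => sup p.1 p.2) &
      continuous (fun p : V * V => inf p.1 p.2)].

Definition cone_le (V : zmodType) (C : set V) (x y : V) : Prop := C (y - x).

Definition asymmetric_cone_norm (R : realType) (X : topologicalLmodType R)
  (C : set X) (Q : X -> X) : Prop :=
  [/\ continuous Q,
      range Q = C, (forall x, C x -> Q x = x),
      (forall (t : R) x, 0 <= t -> Q (t *: x) = t *: Q x) &
      ((forall x y, cone_le C (Q (x + y)) (Q x + Q y)) /\
       (forall x, Q x = 0 -> Q (- x) = 0 -> x = 0))]. 
Definition proper_asymmetric_cone_norm (R : realType) (X : topologicalLmodType R)
  (C : set X) (Q : X -> X) : Prop :=
  asymmetric_cone_norm C Q /\ forall x, Q (x - Q x) = 0.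

(* Main.v *)
Require Import Defs.
From HB Require Import structures.
From mathcomp Require Import all_boot all_order all_algebra.
From mathcomp Require Import all_classical all_reals all_analysis.
Import Order.TTheory GRing.Theory Num.Theory.
Local Open Scope classical_set_scope.
Local Open Scope ring_scope.

Section Helpers.
Set Implicit Arguments.
Context (R : realType) (V : lmodType R).

Lemma pv_addr (le : V -> V -> Prop) : pove le ->
  forall x y z, le x y -> le (z + x) (z + y).
Proof. by case=> _ _ _ Ha _ x y z h; rewrite ![z + _]addrC; apply: Ha. Qed.

Lemma pv_add2 (le : V -> V -> Prop) : pove le ->
  forall a b c d, le a b -> le c d -> le (a + c) (b + d).
Proof.
move=> hp a b c d h1 h2; case: (hp) => _ _ Ht Ha _.
apply: (Ht _ (b + c)); first exact: Ha.
exact: pv_addr.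
Qed.

Lemma pv_sub0 (le : V -> V -> Prop) : pove le ->
  forall x y, le x y -> le 0 (y - x).
Proof.
move=> [_ _ _ Ha _] x y h; have := Ha _ _ (- x) h; by rewrite subrr.
Qed.

Lemma pv_sub0' (le : V -> V -> Prop) : pove le ->
  forall x y, le 0 (y - x) -> le x y.
Proof.
move=> [_ _ _ Ha _] x y h; have := Ha _ _ x h; by rewrite add0r subrK.
Qed.

Lemma pv_subr (le : V -> V -> Prop) : pove le ->
  forall x y z, le x y -> le (x - z) (y - z).
Proof. by move=> [_ _ _ Ha _] x y z h; apply: Ha. Qed.

Lemma pv_scale_inv (le : V -> V -> Prop) : pove le ->
  forall (t : R) x y, 0 < t -> le (t *: x) (t *: y) -> le x y.
Proof.
move=> [_ _ _ _ Hs] t x y t0 h.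
have := Hs (t^-1) _ _ _ h; rewrite !scalerA mulVf ?gt_eqF // !scale1r; apply.
by rewrite invr_ge0 ltW.
Qed.

Lemma pv_sc0 (le : V -> V -> Prop) : pove le ->
  forall (t : R) v, 0 <= t -> le 0 v -> le 0 (t *: v).
Proof. move=> [_ _ _ _ Hs] t v t0 h; have := Hs t _ _ t0 h; by rewrite scaler0. Qed.

Lemma min_uniq (le : V -> V -> Prop) : pove le ->
  forall A m m', is_min le A m -> is_min le A m' -> m = m'.
Proof.
move=> [_ As _ _ _] A m m' [h1 h2] [h1' h2']; apply: As; [exact: h2|exact: h2'].
Qed.

End Helpers.

Theorem theorem5p2 (R : realType) (V : topologicalLmodType R)
  (le sle : V -> V -> Prop) (sup inf : V -> V -> V) :
  topological_mixed_lattice_space le sle sup inf ->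
  (* (a) Q x = ^u x = x ⋎ 0, cone V_p *)
  proper_asymmetric_cone_norm [set x | le 0 x] (fun x => sup x 0) /\
  (* (b) Q x = x^u = 0 ⋎ x, cone V_sp *)
  (continuous (fun x => sup 0 x) /\
       range (fun x => sup 0 x) = [set x | sle 0 x] /\
       (forall x, sle 0 x -> sup 0 x = x) /\
       (forall (t : R) x, 0 <= t -> sup 0 (t *: x) = t *: sup 0 x) /\
       (forall x y, le (sup 0 (x + y)) (sup 0 x + sup 0 y)) /\
       (forall x, sup 0 x = 0 -> sup 0 (- x) = 0 -> x = 0) /\
       (forall x, sup 0 (x - sup 0 x) = 0) /\
       (forall x y, sle x y -> sle (sup 0 x) (sup 0 y)) /\
       (forall x y, le x y -> le (sup 0 x) (sup 0 y))).
Proof.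
move=> [[Hle [Hsle [Hsup [Hinf [Hsl H3]]]]] csup cinf].
have Hle' := Hle; have Hsle' := Hsle.
case: Hle' => lrefl lanti ltrans ladd lscale.
case: Hsle' => srefl santi strans sadd sscale.
have s1 : forall x y, sle x (sup x y) by move=> x y; case: (Hsup x y) => [[]].
have s2 : forall x y, le y (sup x y) by move=> x y; case: (Hsup x y) => [[]].
have s3 : forall x y w, sle x w -> le y w -> le (sup x y) w.
  by move=> x y w h1 h2; case: (Hsup x y) => _; apply; split.
have i1 : forall x y, sle (inf x y) x by move=> x y; case: (Hinf x y) => [[]].
have i2 : forall x y, le (inf x y) y by move=> x y; case: (Hinf x y) => [[]].
have i3 : forall x y w, sle w x -> le w y -> le w (inf x y).
  by move=> x y w h1 h2; case: (Hinf x y) => _; apply; split.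
have cont1 : forall f g : V -> V, continuous f -> continuous g ->
    continuous (fun x => sup (f x) (g x)).
  move=> f g cf cg x.
  apply: (continuous_comp (f := fun x => (f x, g x))
    (g := fun p : V * V => sup p.1 p.2)); last exact: csup.
  by apply: cvg_pair; [exact: cf | exact: cg].
split.
  have fixa : forall x, le 0 x -> sup x 0 = x.
    move=> x hx; apply: lanti; first by apply: s3.
    exact/Hsl/s1.
  have pos : forall x, le 0 (sup x 0) by move=> x; exact: s2.
  split; last first.
    move=> x; apply: lanti; last exact: pos.
    apply: s3 => //; have := sadd _ _ (- sup x 0) (s1 x 0).
    by rewrite subrr.
  split.
  - apply: (cont1 id (fun=> 0)) => z; [exact: cvg_id | exact: cvg_cst].
  - apply/seteqP; split.
      by move=> _ [x _ <-]; exact: pos.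
    by move=> x hx; exists x => //; exact: fixa.
  - exact: fixa.
  - move=> t x; rewrite le_eqVlt => /orP[/eqP <-|t0].
      by rewrite !scale0r fixa.
    apply: (min_uniq Hle (Hsup (t *: x) 0)); split.
      split; first by apply: sscale; [exact: ltW|exact: s1].
      by apply: (pv_sc0 Hle); [exact: ltW|exact: pos].
    move=> w [hw1 hw2].
    have -> : w = t *: (t^-1 *: w) by rewrite scalerA mulfV ?gt_eqF // scale1r.
    apply: lscale; first exact: ltW.
    apply: s3.
      apply: (pv_scale_inv Hsle _ _ _ t0); rewrite scalerA mulfV ?gt_eqF // scale1r //.
    apply: (pv_scale_inv Hle _ _ _ t0); rewrite scalerA mulfV ?gt_eqF // scale1r //.
    by rewrite scaler0.
  - split.
      move=> x y; rewrite /cone_le /=; apply: pv_sub0 => //.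
      apply: s3; last by have := pv_add2 Hle _ _ _ _ (pos x) (pos y); rewrite addr0.
      apply: (strans _ (sup x 0 + y)); first exact: sadd.
      exact: pv_addr.
    move=> x h1 h2; apply: lanti.
      by have := Hsl _ _ (s1 x 0); rewrite h1.
    have := Hsl _ _ (s1 (- x) 0); rewrite h2 => h.
    by have := ladd _ _ x h; rewrite addNr add0r.
have fixb : forall x, sle 0 x -> sup 0 x = x.
  move=> x hx; apply: lanti; first by apply: s3.
  exact: s2.
have spos : forall x, sle 0 (sup 0 x) by move=> x; exact: s1.
have pos : forall x, le 0 (sup 0 x) by move=> x; exact/Hsl.
have mono_le : forall x y, le x y -> le (sup 0 x) (sup 0 y).
  move=> x y h; apply: s3 => //; exact: (ltrans _ y).
split; first by apply: (cont1 (fun=> 0) id) => z; [exact: cvg_cst | exact: cvg_id].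
split.
  apply/seteqP; split.
    by move=> _ [x _ <-]; exact: spos.
  by move=> x hx; exists x => //; exact: fixb.
split; first exact: fixb.
split.
  move=> t x; rewrite le_eqVlt => /orP[/eqP <-|t0].
    by rewrite !scale0r fixb.
  apply: (min_uniq Hle (Hsup 0 (t *: x))); split.
    split; first by apply: (pv_sc0 Hsle); [exact: ltW|exact: spos].
    by apply: lscale; [exact: ltW|exact: s2].
  move=> w [hw1 hw2].
  have -> : w = t *: (t^-1 *: w) by rewrite scalerA mulfV ?gt_eqF // scale1r.
  apply: lscale; first exact: ltW.
  apply: s3.
    apply: (pv_scale_inv Hsle _ _ _ t0); rewrite scalerA mulfV ?gt_eqF // scale1r //.
    by rewrite scaler0.
  apply: (pv_scale_inv Hle _ _ _ t0); rewrite scalerA mulfV ?gt_eqF // scale1r //.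
split.
  move=> x y; apply: s3; last exact: (pv_add2 Hle).
  apply: (strans _ (sup 0 x)) => //.
  by rewrite -{1}[sup 0 x]addr0; apply: pv_addr.
split.
  move=> x h1 h2; apply: lanti; first by have := s2 0 x; rewrite h1.
  have := s2 0 (- x); rewrite h2 => h.
  by have := ladd _ _ x h; rewrite addNr add0r.
split.
  move=> x; apply: lanti; last exact: pos.
  apply: s3 => //; have := ladd _ _ (- sup 0 x) (s2 0 x).
  by rewrite subrr.
split; last exact: mono_le.
move=> x y hxy.
set m := sup 0 x; set M := sup 0 y.
have hd : sle 0 (y - x) by exact: pv_sub0.
have hMm : le M (m + (y - x)).
  apply: s3.
    by have := pv_add2 Hsle _ _ _ _ (spos x) hd; rewrite addr0.
  have e : x + (y - x) = y by rewrite addrC subrK.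
  by have := ladd _ _ (y - x) (s2 0 x); rewrite e.
have hk : sup 0 x = inf M m.
  apply: lanti; last exact: i2.
  apply: s3; first by case: (H3 M m (spos y) (spos x)).
  apply: (ltrans _ (M - (y - x))).
    apply: pv_sub0' => //.
    have -> : M - (y - x) - x = M - y by rewrite opprB addrA addrAC addrK.
    exact: (pv_sub0 Hle _ _ (s2 0 y)).
  apply: i3.
    apply: pv_sub0' => //.
    have -> : M - (M - (y - x)) = y - x by rewrite opprB addrCA subrr addr0.
    exact: hd.
  apply: pv_sub0' => //.
  have -> : m - (M - (y - x)) = m + (y - x) - M by rewrite opprB addrA.
  exact: (pv_sub0 Hle _ _ hMm).
rewrite /m hk; exact: i1.
Qed.
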